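(* Let $n\ge2$, let $a,b\in H_n\rtimes S_n$ satisfy $\sigma_a=\sigma_b$, and let $x\in H_n$ with $x^{-1}ax=b$. Let $[k]_a$ be a class of size $q$, let $i_1\in[k]_a$ and $i_s=i_1\sigma_a^{s-1}$ for $1\le s\le q$. Then for all $1\le s\le q$, $$t_{i_s}(x)=t_{i_1}(x)+\sum_{d=1}^{s-1}\big(t_{i_d}(\omega_b)-t_{i_d}(\omega_a)\big).$$ In particular the values $t_i(x)$, $i\in[k]_a$, are determined by $t_{i_1}(x)$ and the numbers $t_i(a),t_i(b)$, $i\in[k]_a$.
   Context: $\mathbb{N}=\{1,2,\dots\}$, $X_n=\{1,\dots,n\}\times\mathbb{N}$, permutations act on the right. $H_n$ is the group of bijections $g$ of $X_n$ with $z_i(g)\in\mathbb{N}$, $t_i(g)\in\mathbb{Z}$ such that $(i,m)g=(i,m+t_i(g))$ for all $m\ge z_i(g)$. $S_n$ acts by $(i,m)\sigma=(i\sigma,m)$, and $H_n\rtimes S_n\le\mathrm{Sym}(X_n)$ is generated by $H_n$ and these; each $g\in H_n\rtimes S_n$ is uniquely $g=\omega_g\sigma_g$ with $\omega_g\in H_n$, $\sigma_g\in S_n$, and $t_i(g):=t_i(\omega_g)$. The class $[i]_g$ is the orbit of $i$ under $\langle\sigma_g\rangle$. *)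

(* Defs.v *)
From mathcomp Require Import all_boot all_order all_algebra all_fingroup.
Set Implicit Arguments. Unset Strict Implicit. Unset Printing Implicit Defensive.
Import GRing.Theory Num.Theory.

(* Row i in {1..n} is represented by i : 'I_n (shift by 1),
   the column m in N = {1,2,...} is represented by m.-1 : nat (shift by 1).
   Permutations of X_n are plain functions X_n -> X_n; since permutations act
   on the right, the product g h (first g, then h) is the function h \o g. *)
Definition Xn (n : nat) := ('I_n * nat)%type.

Definition is_trans n (g : Xn n -> Xn n) (i : 'I_n) (t : int) : Prop :=
  exists z : nat, forall m : nat, (z <= m)%N ->
    (g (i, m)).1 = i /\ Posz (g (i, m)).2 = (Posz m + t)%R.

Definition in_H n (g : Xn n -> Xn n) : Prop :=
  bijective g /\ forall i : 'I_n, exists t : int, is_trans g i t.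

Definition sact n (s : 'S_n) (p : Xn n) : Xn n := (s p.1, p.2).

(* Main.v *)
Require Import Defs.
From mathcomp Require Import all_boot all_order all_algebra all_fingroup.
From mathcomp Require Import zify.
Import GRing.Theory Num.Theory.

Lemma key (n : nat) (a b x wa wb : Xn n -> Xn n) (sigma : 'S_n)
  (Ha : forall p, a p = sact sigma (wa p))
  (Hb : forall p, b p = sact sigma (wb p))
  (Hconj : forall p, x (a p) = b (x p))
  (ta tb tx : 'I_n -> int)
  (Hta : forall i, is_trans wa i (ta i))
  (Htb : forall i, is_trans wb i (tb i))
  (Htx : forall i, is_trans x i (tx i)) (i : 'I_n) :
  tx (sigma i) = (tx i + (tb i - ta i))%R.
Proof.
have [z1 H1] := Hta i; have [z2 H2] := Htx (sigma i).
have [z3 H3] := Htx i; have [z4 H4] := Htb i.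
set m := (z1 + z2 + z3 + z4 + absz (ta i) + absz (tx i))%N.
have [E1 E1'] := H1 m ltac:(rewrite /m; lia).
have E := Hconj (i, m).
rewrite Ha /sact E1 in E.
have [E2 E2'] := H2 (wa (i, m)).2 ltac:(lia).
have [E3 E3'] := H3 m ltac:(rewrite /m; lia).
rewrite Hb /sact in E.
have [E4 E4'] := H4 (x (i, m)).2 ltac:(lia).
have Ex : x (i, m) = (i, (x (i, m)).2) by rewrite [LHS]surjective_pairing E3.
rewrite Ex in E E4 E4'.
have Ex2 : (x (sigma i, (wa (i, m)).2)).2 = (wb (i, (x (i, m)).2)).2 by rewrite E.
have : Posz (x (sigma i, (wa (i, m)).2)).2 = Posz (wb (i, (x (i, m)).2)).2 by rewrite Ex2.
rewrite E2' E4' E1' E3'.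
lia.
Qed.

Theorem lemma3p10 (n : nat) (hn : (2 <= n)%N)
  (a b x wa wb : Xn n -> Xn n) (sigma : 'S_n)
  (Hwa : in_H wa) (Hwb : in_H wb)
  (Ha : forall p, a p = sact sigma (wa p))   (* a = omega_a sigma_a *)
  (Hb : forall p, b p = sact sigma (wb p))   (* b = omega_b sigma_b, sigma_b = sigma_a *)
  (Hx : in_H x)
  (Hconj : forall p, x (a p) = b (x p))      (* x^-1 a x = b, i.e. a x = x b *)
  (ta tb tx : 'I_n -> int)
  (Hta : forall i, is_trans wa i (ta i))
  (Htb : forall i, is_trans wb i (tb i))
  (Htx : forall i, is_trans x i (tx i))
  (k i1 : 'I_n) (q : nat)
  (Hq : q = #|porbit sigma k|)
  (Hi1 : i1 \in porbit sigma k) :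
  forall s : nat, (1 <= s <= q)%N ->
    tx ((sigma ^+ s.-1)%g i1) =
      (tx i1 + \sum_(1 <= d < s)
                 (tb ((sigma ^+ d.-1)%g i1) - ta ((sigma ^+ d.-1)%g i1)))%R.
Proof.
have K := @key n a b x wa wb sigma Ha Hb Hconj ta tb tx Hta Htb Htx.
have G : forall s, tx ((sigma ^+ s)%g i1) =
      (tx i1 + \sum_(1 <= d < s.+1)
                 (tb ((sigma ^+ d.-1)%g i1) - ta ((sigma ^+ d.-1)%g i1)))%R.
  elim=> [|s IH]; first by rewrite expg0 perm1 big_geq // addr0.
  by rewrite expgSr permM K IH [in RHS]big_nat_recr //= !addrA.
by case=> [//|s] _; rewrite G.
Qed.
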